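(* For every $m\in\mathbb{N}$, $\eta^{m\text{-}mult}_{(2,2)}(\ell_2;c_0)=\frac m2$, where $\eta^{m\text{-}mult}_{(2,2)}(\ell_2;c_0)$ means $\eta^{m\text{-}mult}_{(2,2)}(\ell_2,\dots,\ell_2;c_0)$ with $m$ copies of $\ell_2$.
   Context: For vectors $x_1,\dots,x_n$ in a Banach space $E$ and $q>0$, $\|(x_k)_{k=1}^n\|_{w,q}:=\sup_{\varphi\in B_{E^*}}\left(\sum_{k=1}^n|\varphi(x_k)|^q\right)^{1/q}$, where $B_{E^*}$ is the closed unit ball of the dual. $\mathcal{L}(E_1,\dots,E_m;F)$ is the space of bounded $m$-linear maps. For $p,q>0$, the multilinear $m$-index of $(p,q)$-summability $\eta^{m\text{-}mult}_{(p,q)}(E_1,\dots,E_m;F)$ is the infimum of all real numbers $s$ with the property: for every $T\in\mathcal{L}(E_1,\dots,E_m;F)$ there is a constant $C\ge0$ (depending only on $m$ and $T$) such that $$\left(\sum_{k_1,\dots,k_m=1}^n\|T(x^{(1)}_{k_1},\dots,x^{(m)}_{k_m})\|^p\right)^{1/p}\le C n^{s}\prod_{i=1}^m\|(x^{(i)}_{k})_{k=1}^n\|_{w,q}$$ for all positive integers $n$ and all $x^{(i)}_k\in E_i$, $1\le k\le n$, $1\le i\le m$. *)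

(* Defs.v *)
From HB Require Import structures.
From mathcomp Require Import all_boot all_order all_algebra.
From mathcomp Require Import all_classical all_reals all_analysis.
Set Implicit Arguments. Unset Strict Implicit. Unset Printing Implicit Defensive.
Import Order.TTheory GRing.Theory Num.Theory.
Import numFieldNormedType.Exports.
Local Open Scope classical_set_scope.
Local Open Scope ring_scope.

Section Defs.
Variable R : realType.

Definition in_l2 (x : nat -> R) : Prop :=
  cvgn (series (fun k => x k ^+ 2)).

Definition l2norm (x : nat -> R) : R :=
  Num.sqrt (limn (series (fun k => x k ^+ 2))).

Definition in_c0 (y : nat -> R) : Prop := y @ \oo --> 0.

Definition c0norm (y : nat -> R) : R := sup (range (fun k => `|y k|)).

(** Closed unit ball of the dual of l_2 : linear functionals on l_2
    with operator norm <= 1 (values outside l_2 are irrelevant). *)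
Definition dual_ball_l2 (phi : (nat -> R) -> R) : Prop :=
  (forall (a : R) (u v : nat -> R), in_l2 u -> in_l2 v ->
      phi (fun k => a * u k + v k) = a * phi u + phi v) /\
  (forall u, in_l2 u -> `|phi u| <= l2norm u).

Definition weak_norm_l2 (q : R) (n : nat) (x : 'I_n -> nat -> R) : R :=
  sup [set powR (\sum_(k < n) powR `|phi (x k)| q) q^-1 | phi in dual_ball_l2].

Definition upd (m : nat) (x : 'I_m -> nat -> R) (i : 'I_m) (u : nat -> R)
  : 'I_m -> nat -> R := fun j => if j == i then u else x j.

(** Bounded m-linear maps l_2 x ... x l_2 -> c_0  (m copies of l_2).
    Such a map is represented by a function on m-tuples of sequences;
    only its values on tuples of l_2 vectors matter. *)
Definition bounded_mlinear_l2_c0 (m : nat)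
    (T : ('I_m -> nat -> R) -> nat -> R) : Prop :=
  (forall x, (forall i, in_l2 (x i)) -> in_c0 (T x)) /\
  (forall x i (a : R) (u v : nat -> R), (forall j, in_l2 (x j)) ->
      in_l2 u -> in_l2 v ->
      forall k, T (upd x i (fun t => a * u t + v t)) k =
                a * T (upd x i u) k + T (upd x i v) k) /\
  (exists C : R, forall x, (forall i, in_l2 (x i)) ->
      c0norm (T x) <= C * \prod_(i < m) l2norm (x i)).

(** The set of admissible exponents s in the definition of the
    multilinear m-index of (p,q)-summability of L(l_2,...,l_2; c_0).
    x i k stands for x^{(i)}_k  (indices are 0-based). *)
Definition admissible_exponent (m : nat) (p q s : R) : Prop :=
  forall T, bounded_mlinear_l2_c0 T ->
  exists C : R, 0 <= C /\
    forall (n : nat) (x : 'I_m -> 'I_n -> nat -> R), (0 < n)%N ->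
      (forall i k, in_l2 (x i k)) ->
      powR (\sum_(kk : {ffun 'I_m -> 'I_n})
               powR `|c0norm (T (fun i => x i (kk i)))| p) p^-1
      <= C * powR n%:R s * \prod_(i < m) weak_norm_l2 q (x i).

(** eta^{m-mult}_{(p,q)}(l_2,...,l_2; c_0), as an extended real
    (infimum of the admissible exponents; +oo if there are none). *)
Definition eta_mult_l2_c0 (m : nat) (p q : R) : \bar R :=
  ereal_inf [set s%:E | s in admissible_exponent m p q].

End Defs.

(* Main.v *)
Require Import Defs.
From HB Require Import structures.
From mathcomp Require Import all_boot all_order all_algebra.
From mathcomp Require Import all_classical all_reals all_analysis.
Import Order.TTheory GRing.Theory Num.Theory.
Import numFieldNormedType.Exports.
From mathcomp Require Import ring lra.
Local Open Scope classical_set_scope.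
Local Open Scope ring_scope.

Set Implicit Arguments. Unset Strict Implicit.
Section L.
Variable R : realType.
Implicit Types u v y : nat -> R.

Lemma l2_partial_le u : in_l2 u -> forall N,
  \sum_(j < N) u j ^+ 2 <= limn (series (fun k => u k ^+ 2)).
Proof.
move=> hu N.
have := @nondecreasing_cvgn_le R (series (fun k => u k ^+ 2)) _ hu N.
rewrite seriesEord /=; apply.
apply/nondecreasing_seqP => n. rewrite /series /= big_ord_recr /=.
by rewrite lerDl sqr_ge0.
Qed.

Lemma l2_lim_ge0 u : in_l2 u -> 0 <= limn (series (fun k => u k ^+ 2)).
Proof. by move=> hu; have := l2_partial_le hu 0; rewrite big_ord0. Qed.

Lemma coord_le u t : in_l2 u -> `|u t| <= l2norm u.
Proof.
move=> hu; rewrite /l2norm -sqrtr_sqr ler_sqrt ?l2_lim_ge0 //.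
apply: le_trans (l2_partial_le hu t.+1).
rewrite big_ord_recr /= lerDr; apply: sumr_ge0 => i _; exact: sqr_ge0.
Qed.

Lemma l2_cvg0 u : in_l2 u -> u @ \oo --> 0.
Proof.
move=> hu; have h2 := cvg_series_cvg_0 hu.
apply/cvgr0Pnorm_lt => e e0.
have := @cvgr0_norm_lt _ _ _ _ _ _ h2 _ (mulr_gt0 e0 e0).
move=> [N _ HN]; exists N => // n /HN.
rewrite normrX => h; rewrite ltNge; apply/negP => h'.
have : e * e <= `|u n| ^+ 2 by rewrite expr2; apply: ler_pM => //; exact: ltW.
by rewrite leNgt h.
Qed.

Lemma fin_series u N : (forall t, (N <= t)%N -> u t = 0) ->
  \forall n \near \oo, series (fun k => u k ^+ 2) n = \sum_(j < N) u j ^+ 2.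
Proof.
move=> h0; exists N => // n /= Nn.
rewrite /series /= -!(big_mkord (fun _ => true) (fun j => u j ^+ 2)).
rewrite (@big_cat_nat _ _ _ N 0 n _ _ (leq0n N) Nn) /= [X in _ + X]big1_seq ?addr0 //.
move=> i /andP[_]; rewrite mem_index_iota => /andP[Ni _].
by rewrite h0 // expr0n.
Qed.

Lemma fin_l2 u N : (forall t, (N <= t)%N -> u t = 0) -> in_l2 u.
Proof. by move=> h; apply/cvg_ex; eexists; apply: cvg_near_cst (fin_series h). Qed.

Lemma fin_l2norm u N : (forall t, (N <= t)%N -> u t = 0) ->
  l2norm u = Num.sqrt (\sum_(j < N) u j ^+ 2).
Proof. move=> h; rewrite /l2norm; congr Num.sqrt; apply: cvg_lim => //; exact: cvg_near_cst (fin_series h). Qed.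

Lemma CS_fin u (c : nat -> R) N : \sum_(j < N) c j ^+ 2 <= 1 ->
  `|\sum_(j < N) u j * c j| <= Num.sqrt (\sum_(j < N) u j ^+ 2).
Proof.
move=> hc.
set U := \sum_(j < N) u j ^+ 2.
have U0 : 0 <= U by apply: sumr_ge0 => i _; exact: sqr_ge0.
set a := Num.sqrt U.
have a0 : 0 <= a by exact: sqrtr_ge0.
have aa : a ^+ 2 = U by rewrite sqr_sqrtr.
have [az|ap] := eqVneq a 0.
  have : U = 0 by rewrite -aa az expr0n.
  move/eqP; rewrite psumr_eq0; last by move=> i _; exact: sqr_ge0.
  move/allP => hz; rewrite big1 ?normr0 // => i _.
  have := hz i (mem_index_enum i); rewrite sqrf_eq0 => /eqP ->; by rewrite mul0r.
have apos : 0 < a by rewrite lt_def ap a0.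
apply: le_trans (ler_norm_sum _ _ _) _.
have key : forall j, 2 * a * `|u j * c j| <= u j ^+ 2 + a ^+ 2 * c j ^+ 2.
  move=> j; rewrite normrM.
  have h1 : 0 <= (`|u j| - a * `|c j|) ^+ 2 by exact: sqr_ge0.
  have e1 : u j ^+ 2 = `|u j| ^+ 2 by rewrite real_normK ?num_real.
  have e2 : c j ^+ 2 = `|c j| ^+ 2 by rewrite real_normK ?num_real.
  rewrite e1 e2; nra.
have : 2 * a * \sum_(j < N) `|u j * c j| <= 2 * a ^+ 2.
  rewrite mulr_sumr; apply: le_trans; first by apply: ler_sum => j _; exact: key j.
  rewrite big_split /= -mulr_sumr -/U -aa.
  have : a ^+ 2 * \sum_(j < N) c j ^+ 2 <= a ^+ 2 * 1.
    by apply: ler_wpM2l => //; exact: sqr_ge0.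
  by rewrite mulr1; lra.
move=> h; rewrite expr2 in h.
have hh : 0 < 2 * a by rewrite mulr_gt0.
by rewrite -(ler_pM2l hh) -mulrA; move: h; rewrite !mulrA.
Qed.

Lemma powsq (a : R) : powR `|a| 2 = a ^+ 2.
Proof. by rewrite powR_mulrn // real_normK ?num_real. Qed.

Lemma powsqrt (S : R) : 0 <= S -> powR S 2^-1 = Num.sqrt S.
Proof. exact: powR12_sqrt. Qed.

Lemma weak_set_eq n (x : 'I_n -> nat -> R) :
  [set powR (\sum_(k < n) powR `|phi (x k)| 2) 2^-1 | phi in @dual_ball_l2 R] =
  [set Num.sqrt (\sum_(k < n) phi (x k) ^+ 2) | phi in @dual_ball_l2 R].
Proof.
have E (phi : (nat -> R) -> R) : powR (\sum_(k < n) powR `|phi (x k)| 2) 2^-1 =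
    Num.sqrt (\sum_(k < n) phi (x k) ^+ 2).
  rewrite powsqrt; last by apply: sumr_ge0 => k _; exact: powR_ge0.
  by congr Num.sqrt; apply: eq_bigr => k _; rewrite powsq.
by apply/seteqP; split => y [phi hphi <-]; exists phi.
Qed.

Lemma weakE n (x : 'I_n -> nat -> R) : weak_norm_l2 2 x =
  sup [set Num.sqrt (\sum_(k < n) phi (x k) ^+ 2) | phi in @dual_ball_l2 R].
Proof. by rewrite /weak_norm_l2 weak_set_eq. Qed.

Lemma weak_ub n (x : 'I_n -> nat -> R) : (forall k, in_l2 (x k)) ->
  has_ubound [set Num.sqrt (\sum_(k < n) phi (x k) ^+ 2) | phi in @dual_ball_l2 R].
Proof.
move=> hx; exists (Num.sqrt (\sum_(k < n) l2norm (x k) ^+ 2)).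
move=> y [phi [_ hb] <-]; rewrite ler_sqrt; last first.
  by apply: sumr_ge0 => k _; exact: sqr_ge0.
apply: ler_sum => k _.
have h := hb _ (hx k).
rewrite -real_normK ?num_real //; rewrite lerXn2r ?nnegrE ?normr_ge0 //.
exact: le_trans (normr_ge0 _) h.
Qed.

Definition trfun (y : nat -> R) (N : nat) (u : nat -> R) : R :=
  \sum_(j < N) u j * (y j / Num.sqrt (\sum_(i < N) y i ^+ 2)).

Lemma trfun_ball y N : dual_ball_l2 (trfun y N).
Proof.
split.
  move=> a u v _ _; rewrite /trfun mulr_sumr -big_split /=.
  by apply: eq_bigr => j _; rewrite mulrDl -mulrA.
move=> u hu.
set P := \sum_(i < N) y i ^+ 2.
have P0 : 0 <= P by apply: sumr_ge0 => i _; exact: sqr_ge0.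
have hc : \sum_(j < N) (y j / Num.sqrt P) ^+ 2 <= 1.
  under eq_bigr do rewrite expr_div_n.
  rewrite -mulr_suml sqr_sqrtr // -/P.
  have [->|Pn] := eqVneq P 0; first by rewrite mul0r ler01.
  by rewrite divff.
rewrite /trfun -/P. have h := @CS_fin u (fun j => y j / Num.sqrt P) N hc. eapply le_trans; first exact: h.
rewrite /l2norm ler_sqrt ?l2_lim_ge0 //; exact: l2_partial_le.
Qed.

Lemma trfun_self y N : trfun y N y = Num.sqrt (\sum_(i < N) y i ^+ 2).
Proof.
rewrite /trfun; set P := \sum_(i < N) y i ^+ 2.
have P0 : 0 <= P by apply: sumr_ge0 => i _; exact: sqr_ge0.
under eq_bigr do rewrite mulrA -expr2.
rewrite -mulr_suml -/P.
have [->|Pn] := eqVneq P 0; first by rewrite sqrtr0 mul0r.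
have s0 : Num.sqrt P != 0 by rewrite sqrtr_eq0 -ltNge lt_def Pn P0.
by rewrite -{1}(sqr_sqrtr P0) expr2 -mulrA divff // mulr1.
Qed.

Lemma weak_ge n (x : 'I_n -> nat -> R) k : (forall k, in_l2 (x k)) ->
  l2norm (x k) <= weak_norm_l2 2 x.
Proof.
move=> hx; rewrite weakE.
set w := sup _.
have hN : forall N, Num.sqrt (\sum_(i < N) x k i ^+ 2) <= w.
  move=> N; apply: le_trans (ub_le_sup (weak_ub hx) _) => /=; last first.
    by exists (trfun (x k) N) => //; exact: trfun_ball.
  rewrite (bigD1 k) //= trfun_self ler_sqrt; last first.
    by apply: addr_ge0; [exact: sqr_ge0 | apply: sumr_ge0 => i _; exact: sqr_ge0].
  rewrite sqr_sqrtr ?lerDl; last by apply: sumr_ge0 => i _; exact: sqr_ge0.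
  by apply: sumr_ge0 => i _; exact: sqr_ge0.
have w0 : 0 <= w by apply: le_trans (hN 0%N); exact: sqrtr_ge0.
have -> : w = Num.sqrt (w ^+ 2) by rewrite sqrtr_sqr ger0_norm.
rewrite /l2norm ler_sqrt ?sqr_ge0 //.
apply: limr_le; first exact: hx.
apply: nearW => N /=; rewrite seriesEord /=.
have h := hN N.
have P0 : 0 <= \sum_(i < N) x k i ^+ 2 by apply: sumr_ge0 => i _; exact: sqr_ge0.
by rewrite -(sqr_sqrtr P0) lerXn2r ?nnegrE ?sqrtr_ge0.
Qed.

Lemma c0_ub y : in_c0 y -> has_ubound (range (fun k => `|y k|)).
Proof.
move=> hy; have := @cvgr0_norm_lt _ _ _ _ _ _ hy 1 ltr01.
move=> [N _ HN]; exists (1 + \sum_(j < N) `|y j|) => z [k _ <-].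
have s0 : 0 <= \sum_(j < N) `|y j| by apply: sumr_ge0 => j _.
have [kN|Nk] := ltnP k N.
  rewrite (bigD1 (Ordinal kN)) //=.
  have : 0 <= \sum_(j < N | j != Ordinal kN) `|y j| by apply: sumr_ge0 => j _.
  lra.
have := HN k Nk; rewrite /= => h; apply: le_trans (ltW h) _; by rewrite lerDl.
Qed.

Lemma c0norm_ge y k : has_ubound (range (fun k => `|y k|)) -> `|y k| <= c0norm y.
Proof. by move=> h; apply: ub_le_sup h _ _; exists k. Qed.

Lemma c0norm_ge0 y : in_c0 y -> 0 <= c0norm y.
Proof. move=> h; apply: le_trans (c0norm_ge 0 (c0_ub h)); exact: normr_ge0. Qed.

Lemma weak_ge0 n (x : 'I_n -> nat -> R) : (0 < n)%N -> (forall k, in_l2 (x k)) ->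
  0 <= weak_norm_l2 2 x.
Proof.
move=> n0 hx; apply: le_trans (weak_ge (Ordinal n0) hx).
rewrite /l2norm; exact: sqrtr_ge0.
Qed.

Lemma powR_half_nat (n m : nat) :
  powR (n%:R : R) (m%:R / 2) = Num.sqrt (n%:R ^+ m).
Proof. by rewrite powRrM powR_mulrn // powsqrt // exprn_ge0. Qed.

Lemma upper m T : bounded_mlinear_l2_c0 T -> exists C : R, 0 <= C /\
    forall (n : nat) (x : 'I_m -> 'I_n -> nat -> R), (0 < n)%N ->
      (forall i k, in_l2 (x i k)) ->
      powR (\sum_(kk : {ffun 'I_m -> 'I_n})
               powR `|c0norm (T (fun i => x i (kk i)))| 2) 2^-1
      <= C * powR n%:R (m%:R / 2) * \prod_(i < m) weak_norm_l2 2 (x i).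
Proof.
move=> [hc0 [_ [C0 hC0]]]; exists `|C0|; split => // n x n0 hx.
set W := \prod_(i < m) weak_norm_l2 2 (x i).
have W0 : 0 <= W by apply: prodr_ge0 => i _; exact: weak_ge0.
have hB : forall kk : {ffun 'I_m -> 'I_n},
    powR `|c0norm (T (fun i => x i (kk i)))| 2 <= (`|C0| * W) ^+ 2.
  move=> kk; rewrite powsq.
  have hy : forall i, in_l2 (x i (kk i)) by move=> i; exact: hx.
  have c0 := c0norm_ge0 (hc0 _ hy).
  rewrite lerXn2r ?nnegrE ?mulr_ge0 //.
  apply: le_trans (hC0 _ hy) _.
  have P0 : 0 <= \prod_(i < m) l2norm (x i (kk i)).
    by apply: prodr_ge0 => i _; rewrite /l2norm sqrtr_ge0.
  apply: le_trans (ler_wpM2r P0 (ler_norm C0)) _.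
  apply: ler_wpM2l => //; apply: ler_prod => i _.
  rewrite /l2norm sqrtr_ge0 /=; exact: weak_ge.
have hS : \sum_(kk : {ffun 'I_m -> 'I_n})
               powR `|c0norm (T (fun i => x i (kk i)))| 2 <=
           n%:R ^+ m * (`|C0| * W) ^+ 2.
  apply: le_trans; first by apply: ler_sum => kk _; exact: hB.
  by rewrite sumr_const card_ffun !card_ord -[_ *+ (n ^ m)]mulr_natr natrX mulrC.
have S0 : 0 <= \sum_(kk : {ffun 'I_m -> 'I_n})
               powR `|c0norm (T (fun i => x i (kk i)))| 2.
  by apply: sumr_ge0 => kk _; exact: powR_ge0.
rewrite powsqrt //.
apply: le_trans (_ : _ <= Num.sqrt (n%:R ^+ m * (`|C0| * W) ^+ 2)) _.
  rewrite ler_sqrt; first exact: hS.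
  by rewrite mulr_ge0 ?sqr_ge0 // exprn_ge0.
rewrite sqrtrM ?exprn_ge0 // sqrtr_sqr ger0_norm ?mulr_ge0 //.
by rewrite powR_half_nat mulrCA mulrA.
Qed.

End L.

Section L2.
Variable R : realType.
Implicit Types u v y : nat -> R.

Definition Tm m (x : 'I_m -> nat -> R) (j : nat) : R :=
  match (pickle_inv j : option {ffun 'I_m -> nat}) with
  | Some f => \prod_(i < m) x i (f i)
  | None => 0
  end.

Lemma Tm_lin m (x : 'I_m -> nat -> R) i (a : R) u v k :
  Tm (upd x i (fun t => a * u t + v t)) k =
  a * Tm (upd x i u) k + Tm (upd x i v) k.
Proof.
rewrite /Tm; case: (pickle_inv k) => [f|]; last by rewrite mulr0 addr0.
have E (w : nat -> R) : \prod_(j < m) upd x i w j (f j) =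
   w (f i) * \prod_(j < m | j != i) x j (f j).
  rewrite (bigD1 i) //= /upd eqxx; congr (_ * _).
  by apply: eq_bigr => j /negbTE ->.
rewrite !E.
by rewrite mulrDl mulrA.
Qed.
Lemma Tm_abs_le m (x : 'I_m -> nat -> R) j : (forall i, in_l2 (x i)) ->
  `|Tm x j| <= \prod_(i < m) l2norm (x i).
Proof.
move=> hx; rewrite /Tm; case: (pickle_inv j) => [f|].
  rewrite normr_prod; apply: ler_prod => i _.
  by rewrite normr_ge0 /=; exact: coord_le.
by rewrite normr0; apply: prodr_ge0 => i _; rewrite /l2norm sqrtr_ge0.
Qed.

Lemma Tm_c0 m (x : 'I_m -> nat -> R) : (forall i, in_l2 (x i)) -> in_c0 (Tm x).
Proof.
move=> hx; apply/cvgr0Pnorm_lt => e e0.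
set K := \prod_(i < m) (l2norm (x i) + 1).
have B0 : forall i, 0 <= l2norm (x i) by move=> i; rewrite /l2norm sqrtr_ge0.
have K1 : forall i, \prod_(i' < m | i' != i) (l2norm (x i') + 1) <= K.
  move=> i; rewrite /K [X in _ <= X](bigD1 i) //=.
  have P0 : 0 <= \prod_(i' < m | i' != i) (l2norm (x i') + 1).
    by apply: prodr_ge0 => j _; rewrite addr_ge0.
  by rewrite mulrDl mul1r lerDr mulr_ge0.
have K0 : 0 < K by apply: prodr_gt0 => i _; rewrite ltr_wpDl.
have d0 : 0 < e / K by rewrite divr_gt0.
have := filter_forall _ (fun i => @cvgr0_norm_lt _ _ _ _ _ _ (l2_cvg0 (hx i)) _ d0).
move=> [N _ HN].
set M := \max_(g : {ffun 'I_m -> 'I_N})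
    pickle ([ffun i => nat_of_ord (g i)] : {ffun 'I_m -> nat}).
exists M.+1 => // j /= Mj.
rewrite /Tm; case hj: (pickle_inv j) => [f|]; last by rewrite normr0.
have pj : pickle f = j by have := @pickle_invK {ffun 'I_m -> nat} j; rewrite hj.
case: (boolP [exists i, (N <= f i)%N]) => [/existsP [i hi]|/existsPn hall]; last first.
  have fN : forall i, (f i < N)%N by move=> i; rewrite ltnNge; exact: hall.
  pose g : {ffun 'I_m -> 'I_N} := [ffun i => Ordinal (fN i)].
  have fg : [ffun i => nat_of_ord (g i)] = f by apply/ffunP => i; rewrite !ffunE.
  have : (j <= M)%N.
    rewrite -pj -fg; exact: (@leq_bigmax _ (fun g : {ffun 'I_m -> 'I_N} =>
      pickle ([ffun i => nat_of_ord (g i)] : {ffun 'I_m -> nat})) g).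
  by rewrite leqNgt Mj.
rewrite normr_prod (bigD1 i) //=.
have hi' := HN _ hi i.
have P0 : 0 <= \prod_(i' < m | i' != i) `|x i' (f i')|.
  by apply: prodr_ge0 => j0 _.
have P1 : \prod_(i' < m | i' != i) `|x i' (f i')| <= K.
  apply: le_trans (K1 i); apply: ler_prod => j0 _.
  rewrite normr_ge0 /=; apply: le_trans (coord_le _ (hx j0)) _.
  by rewrite lerDl.
apply: le_lt_trans (ler_wpM2l (normr_ge0 _) P1) _.
by rewrite -ltr_pdivlMr.
Qed.

Lemma Tm_bounded m : bounded_mlinear_l2_c0 (@Tm m).
Proof.
split; first exact: Tm_c0.
split; first by move=> x i a u v _ _ _ k; exact: Tm_lin.
exists 1 => x hx; rewrite mul1r; apply: ge_sup.
  by exists `|Tm x 0|; exists 0%N.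
by move=> z [j _ <-]; exact: Tm_abs_le.
Qed.
End L2.

Section L3.
Variable R : realType.
Implicit Types u v y : nat -> R.

Definition eb (k : nat) : nat -> R := fun t => (t == k)%:R.

Lemma eb_fin k t : (k.+1 <= t)%N -> eb k t = 0.
Proof.
move=> h; rewrite /eb; case: eqP => // E; by rewrite E ltnn in h.
Qed.

Lemma eb_l2 k : in_l2 (eb k).
Proof. exact: fin_l2 (@eb_fin k). Qed.

Lemma weak_basis n : weak_norm_l2 2 (fun k : 'I_n => eb k) <= 1.
Proof.
rewrite weakE; apply: ge_sup.
  eexists; exists (trfun (eb 0) 0) => //; exact: trfun_ball.
move=> z [phi [hlin hb] <-].
pose b := fun k : nat => phi (eb k).
pose v r := fun t => \sum_(k < r) b k * eb k t.
have vfin : forall r t, (r <= t)%N -> v r t = 0.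
  move=> r t rt; rewrite /v big1 // => k _; rewrite eb_fin ?mulr0 //.
  exact: leq_trans (ltn_ord k) rt.
have phiv : forall r, phi (v r) = \sum_(k < r) b k ^+ 2.
  elim => [|r IH].
    have := hb _ (fin_l2 (vfin 0%N)).
    rewrite (fin_l2norm (vfin 0%N)) big_ord0 sqrtr0 normr_le0 => /eqP ->.
    by rewrite big_ord0.
  have -> : v r.+1 = (fun t => b r * eb r t + v r t).
    by apply: funext => t; rewrite /v big_ord_recr /= addrC.
  rewrite hlin; [|exact: eb_l2|exact: fin_l2 (vfin r)].
  transitivity (b r * phi (eb r) + \sum_(k < r) b k ^+ 2); first by congr (_ + _); exact: IH.
  rewrite big_ord_recr /=.
  by rewrite expr2 addrC.
have vn : forall j : 'I_n, v n j = b j.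
  move=> j; rewrite /v (bigD1 j) //= /eb eqxx mulr1 big1 ?addr0 // => k hk.
  suff -> : (nat_of_ord j == nat_of_ord k) = false by rewrite mulr0.
  by apply/negbTE; rewrite eq_sym.
set A := \sum_(k < n) phi (eb k) ^+ 2.
have A0 : 0 <= A by apply: sumr_ge0 => k _; exact: sqr_ge0.
have hA : A <= Num.sqrt A.
  have := hb _ (fin_l2 (vfin n)).
  rewrite (fin_l2norm (vfin n)) phiv.
  have -> : \sum_(j < n) v n j ^+ 2 = A by apply: eq_bigr => j _; rewrite vn.
  by move=> h; apply: le_trans (ler_norm _) h.
set s := Num.sqrt A in hA *.
have s0 : 0 <= s by exact: sqrtr_ge0.
have sA : s ^+ 2 = A by rewrite sqr_sqrtr.
rewrite -sA in hA; nra.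
Qed.

Lemma Tm_basis_ge m n (kk : {ffun 'I_m -> 'I_n}) :
  1 <= c0norm (Tm (fun i => eb (kk i))).
Proof.
have hx : forall i, in_l2 (eb (kk i)) by move=> i; exact: eb_l2.
pose f : {ffun 'I_m -> nat} := [ffun i => nat_of_ord (kk i)].
apply: le_trans (c0norm_ge (pickle f) (c0_ub (Tm_c0 hx))).
rewrite /Tm pickleK_inv big1 ?normr1 // => i _.
by rewrite /eb ffunE eqxx.
Qed.

Lemma lower m (s : R) : admissible_exponent m 2 2 s -> m%:R / 2 <= s.
Proof.
move=> /(_ _ (@Tm_bounded R m)) [C [C0 hC]].
have key : forall n, (0 < n)%N -> powR (n%:R : R) (m%:R / 2) <= C * powR n%:R s.
  move=> n n0.
  have := hC n (fun i (k : 'I_n) => eb k) n0 (fun i k => @eb_l2 k).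
  have W1 : \prod_(i < m) weak_norm_l2 2 (fun k : 'I_n => eb k) <= 1.
    apply: (@le_trans _ _ (\prod_(i < m) (1 : R))); last by rewrite big1.
    apply: ler_prod => i _; rewrite weak_basis andbT.
    apply: weak_ge0 => // k; exact: eb_l2.
  have W0 : 0 <= \prod_(i < m) weak_norm_l2 2 (fun k : 'I_n => eb k).
    apply: prodr_ge0 => i _; apply: weak_ge0 => // k; exact: eb_l2.
  have CP : 0 <= C * powR n%:R s by rewrite mulr_ge0 // powR_ge0.
  move=> h; apply: le_trans (le_trans h _); last first.
    by rewrite -[X in _ <= X]mulr1 ler_wpM2l.
  set S := \sum_kk _.
  have S0 : 0 <= S by apply: sumr_ge0 => kk _; exact: powR_ge0.
  have hS : n%:R ^+ m <= S.
    apply: le_trans (_ : \sum_(kk : {ffun 'I_m -> 'I_n}) (1 : R) <= S).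
      by rewrite sumr_const card_ffun !card_ord -[_ *+ (n ^ m)]mulr_natr natrX mul1r.
    apply: ler_sum => kk _; rewrite powsq.
    have hc := Tm_basis_ge kk.
    by rewrite expr2 -[1]mulr1 ler_pM // ler01.
  rewrite powR_half_nat powsqrt // ler_sqrt //.
apply/negPn/negP; rewrite -ltNge => hs.
set d := m%:R / 2 - s.
have d0 : 0 < d by rewrite subr_gt0.
have hd : forall n, (0 < n)%N -> powR (n%:R : R) d <= C.
  move=> n n0; have := key n n0.
  have -> : m%:R / 2 = s + d by rewrite /d; ring.
  rewrite powRD; last by apply/implyP => _; rewrite pnatr_eq0 -lt0n.
  have ps : 0 < powR (n%:R : R) s by rewrite powR_gt0 // ltr0n.
  by rewrite [C * _]mulrC ler_pM2l.
set y := powR (C + 1) d^-1.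
have y0 : 0 <= y by exact: powR_ge0.
pose n := (Num.Def.archi_bound y).+1.
have ny : y < n%:R.
  apply: lt_le_trans (archi_boundP y0) _; by rewrite ler_nat.
have := hd n isT.
have : powR y d < powR (n%:R : R) d.
  by apply: gt0_ltr_powR => //; rewrite nnegrE // (le_trans y0 (ltW ny)).
rewrite /y -powRrM mulVf ?gt_eqF // powRr1 ?addr_ge0 //.
lra.
Qed.

End L3.

Theorem mainTheorem3 (R : realType) (m : nat) (hm : (0 < m)%N) :
  eta_mult_l2_c0 m (2 : R) 2 = ((m%:R / 2 : R))%:E.
Proof.
rewrite /eta_mult_l2_c0; apply/eqP; rewrite eq_le; apply/andP; split.
  apply: ge_ereal_inf; exists (m%:R / 2)%:E => //.
  by exists (m%:R / 2) => // T hT; exact: upper.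
apply/ereal_infP => y [s hs <-]; rewrite lee_fin; exact: lower hs.
Qed.
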